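(* Let $S$ be a $\Gamma$-hemiring and let $\mu$ be a fuzzy h-ideal of $S$. Then for every $x\in S$, $\langle x,\mu^{+}\rangle$ is a fuzzy h-ideal of $S$, where $\mu^{+}(y)=\mu(y)-\mu(0)+1$ for $y\in S$.
   Context: A $\Gamma$-hemiring is a pair of additive commutative semigroups with zero $S$ and $\Gamma$ with a map $S\times\Gamma\times S\to S$, $(a,\alpha,b)\mapsto a\alpha b$, such that for all $a,b,c\in S$, $\alpha,\beta\in\Gamma$: $(a+b)\alpha c=a\alpha c+b\alpha c$; $a\alpha(b+c)=a\alpha b+a\alpha c$; $a(\alpha+\beta)b=a\alpha b+a\beta b$; $a\alpha(b\beta c)=(a\alpha b)\beta c$; $0\alpha a=0=a\alpha0$; $a0b=0=b0a$. A fuzzy h-ideal of $S$ is a map $\mu:S\to[0,1]$, not identically $0$, such that for all $x,y,a,b,z\in S$, $\gamma\in\Gamma$: $\mu(x+y)\ge\min\{\mu(x),\mu(y)\}$; $\mu(x\gamma y)\ge\mu(x)$ and $\mu(x\gamma y)\ge\mu(y)$; $x+a+z=b+z$ implies $\mu(x)\ge\min\{\mu(a),\mu(b)\}$. The extension of a fuzzy subset $\mu$ by $x$ is $\langle x,\mu\rangle(y)=\inf_{s\in S,\ \alpha,\gamma\in\Gamma}\mu(x\alpha s\gamma y)$. *)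

(* Defs.v *)
From HB Require Import structures.
From mathcomp Require Import all_boot all_order all_algebra.
From mathcomp Require Import all_classical all_reals.
Set Implicit Arguments. Unset Strict Implicit. Unset Printing Implicit Defensive.
Import Order.TTheory GRing.Theory Num.Theory.
Local Open Scope classical_set_scope.
Local Open Scope ring_scope.

Record GammaHemiring := {
  carrier :> Type;
  gam : Type;
  sadd : carrier -> carrier -> carrier;
  szero : carrier;
  gadd : gam -> gam -> gam;
  gzero : gam;
  tmul : carrier -> gam -> carrier -> carrier;
  saddA : forall a b c, sadd a (sadd b c) = sadd (sadd a b) c;
  saddC : forall a b, sadd a b = sadd b a;
  sadd0 : forall a, sadd szero a = a;
  gaddA : forall a b c, gadd a (gadd b c) = gadd (gadd a b) c;
  gaddC : forall a b, gadd a b = gadd b a;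
  gadd0 : forall a, gadd gzero a = a;
  tmulDl : forall a b c al, tmul (sadd a b) al c = sadd (tmul a al c) (tmul b al c);
  tmulDr : forall a b c al, tmul a al (sadd b c) = sadd (tmul a al b) (tmul a al c);
  tmulDm : forall a b al be, tmul a (gadd al be) b = sadd (tmul a al b) (tmul a be b);
  tmulA : forall a b c al be, tmul a al (tmul b be c) = tmul (tmul a al b) be c;
  tmul0l : forall a al, tmul szero al a = szero;
  tmul0r : forall a al, tmul a al szero = szero;
  tmul0m : forall a b, tmul a gzero b = szero /\ tmul b gzero a = szero
}.

Definition fuzzy_h_ideal (R : realType) (S : GammaHemiring) (mu : S -> R) : Prop :=
  (forall x, 0 <= mu x <= 1) /\
  (exists x, mu x != 0) /\
  (forall x y, mu (sadd x y) >= Order.min (mu x) (mu y)) /\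
  (forall x y (g : gam S), mu (tmul x g y) >= mu x /\ mu (tmul x g y) >= mu y) /\
  (forall x a b z, sadd (sadd x a) z = sadd b z -> mu x >= Order.min (mu a) (mu b)).

Definition fuzzy_plus (R : realType) (S : GammaHemiring) (mu : S -> R) : S -> R :=
  fun y => mu y - mu (szero S) + 1.

(* extension <x, mu>(y) = inf_{s, alpha, gamma} mu (x alpha s gamma y) *)
Definition fuzzy_ext (R : realType) (S : GammaHemiring) (x : S) (mu : S -> R) : S -> R :=
  fun y => inf [set r | exists (s : S) (al ga : gam S), r = mu (tmul (tmul x al s) ga y)].

(* Main.v *)
Require Import Defs.
From mathcomp Require Import all_boot all_order all_algebra.
From mathcomp Require Import all_classical all_reals.
From mathcomp Require Import lra.
Import Order.TTheory GRing.Theory Num.Theory.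
Local Open Scope classical_set_scope.
Local Open Scope ring_scope.

Theorem proposition3p12 (R : realType) (S : GammaHemiring) (mu : S -> R) :
  fuzzy_h_ideal mu ->
  forall x : S, fuzzy_h_ideal (fuzzy_ext x (fuzzy_plus mu)).
Proof.
move=> [H01 [Hnz [Hadd [Hmul Hh]]]] x.
have Hmu0 : forall y, mu y <= mu (szero S).
  by move=> y; have [_ h] := Hmul (szero S) y (gzero S); rewrite tmul0l in h.
set mup := fuzzy_plus mu.
have Hp01 : forall y, 0 <= mup y <= 1.
  move=> y; rewrite /mup /fuzzy_plus; have := H01 y; have := H01 (szero S);
  have := Hmu0 y; move=> h /andP[a b] /andP[c d]; apply/andP; split; lra.
have Hpmin : forall u a b, Order.min (mu a) (mu b) <= mu u ->
    Order.min (mup a) (mup b) <= mup u.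
  move=> u a b; rewrite !ge_min /mup /fuzzy_plus !lerD2r.
  by case/orP=> h; apply/orP; [left|right].
have Hpmono : forall u a, mu a <= mu u -> mup a <= mup u.
  by move=> u a h; rewrite /mup /fuzzy_plus !lerD2r.
set F := fun y => [set r | exists (s : S) (al ga : gam S),
   r = mup (tmul (tmul x al s) ga y)].
have HF0 : forall y, nonempty (F y).
  by move=> y; exists (mup (tmul (tmul x (gzero S) (szero S)) (gzero S) y));
   exists (szero S), (gzero S), (gzero S).
have Hlb : forall y, has_lbound (F y).
  by move=> y; exists 0 => r [s [al [ga ->]]]; have /andP[] := Hp01 (tmul (tmul x al s) ga y).
have Hle : forall y s al ga, fuzzy_ext x mup y <= mup (tmul (tmul x al s) ga y).
  by move=> y s al ga; apply: (ge_inf (Hlb y)); exists s, al, ga.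
have Hge : forall y c, (forall s al ga, c <= mup (tmul (tmul x al s) ga y)) ->
    c <= fuzzy_ext x mup y.
  by move=> y c h; apply: lb_le_inf; [exact: HF0 | move=> r [s [al [ga ->]]]].
split.
  move=> y; apply/andP; split.
    by apply: Hge => s al ga; have /andP[] := Hp01 (tmul (tmul x al s) ga y).
  have /andP[_ h] := Hp01 (tmul (tmul x (gzero S) (szero S)) (gzero S) y).
  exact: le_trans (Hle _ _ _ _) h.
split.
  exists (szero S).
  have -> : fuzzy_ext x mup (szero S) = 1.
    rewrite /fuzzy_ext.
    have -> : [set r | exists (s : S) (al ga : gam S),
       r = mup (tmul (tmul x al s) ga (szero S))] = [set 1].
      apply/seteqP; split => r /=.
        by move=> [s [al [ga ->]]]; rewrite tmul0r /mup /fuzzy_plus subrr add0r.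
      move=> ->; exists (szero S), (gzero S), (gzero S).
      by rewrite tmul0r /mup /fuzzy_plus subrr add0r.
    exact: inf1.
  exact: oner_neq0.
split.
  move=> y z; apply: Hge => s al ga; rewrite tmulDr.
  apply: le_trans (Hpmin _ _ _ (Hadd _ _)).
  by rewrite le_min; apply/andP; split; rewrite ge_min Hle ?orbT.
split.
  move=> y z g; split; apply: Hge => s al ga.
    rewrite tmulA; apply: le_trans (Hle y s al ga) _.
    by apply: Hpmono; have [h _] := Hmul (tmul (tmul x al s) ga y) z g.
  have -> : tmul (tmul x al s) ga (tmul y g z) = tmul (tmul x al (tmul s ga y)) g z.
    by rewrite !tmulA.
  exact: (Hle z (tmul s ga y) al g).
move=> y a b z E; apply: Hge => s al ga.
have E' : sadd (sadd (tmul (tmul x al s) ga y) (tmul (tmul x al s) ga a)) (tmul (tmul x al s) ga z)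
        = sadd (tmul (tmul x al s) ga b) (tmul (tmul x al s) ga z).
  by rewrite -tmulDr -tmulDr -tmulDr E.
have H1 := Hpmin _ _ _ (Hh _ _ _ _ E').
apply: le_trans H1.
rewrite le_min; apply/andP; split.
  by rewrite ge_min Hle.
by rewrite ge_min Hle orbT.
Qed.
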